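(* No monoid admitting a non-trivial idempotent (an element $e$ with $e^2=e\neq 1_M$) is strongly sofic.
   Context: Hamming metric on $\operatorname{Map}(D)$ (monoid of maps $D\to D$, $D$ finite non-empty): $d_D^{\mathrm{Ham}}(f,g)=\frac{1}{|D|}|\{v:f(v)\ne g(v)\}|$. A monoid $M$ is strongly sofic if for every finite $K\subset M$ there is an integer $\Delta_K\ge1$ such that for every $\varepsilon>0$ there exist a non-empty finite set $D$ and a map $\sigma\colon M\to\operatorname{Map}(D)$ with (1) $\sigma(1_M)=\mathrm{Id}_D$; (2) $d_D^{\mathrm{Ham}}(\sigma(k_1k_2),\sigma(k_1)\sigma(k_2))\le\varepsilon$ for $k_1,k_2\in K$; (3) $d_D^{\mathrm{Ham}}(\sigma(k_1),\sigma(k_2))\ge1-\varepsilon$ for distinct $k_1,k_2\in K$; (4) $|\sigma(k)^{-1}(v)|\le\Delta_K$ for $k\in K$, $v\in D$. *)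

(* Defs.v *)
From mathcomp Require Import all_boot.
From Stdlib Require Import Reals.
Set Implicit Arguments. Unset Strict Implicit. Unset Printing Implicit Defensive.

Record monoid := Monoid {
  mcarrier :> Type;
  mmul : mcarrier -> mcarrier -> mcarrier;
  mone : mcarrier;
  mmulA : forall x y z, mmul x (mmul y z) = mmul (mmul x y) z;
  mmul1 : forall x, mmul mone x = x;
  mmulr1 : forall x, mmul x mone = x }.

Definition hamming (D : finType) (f g : D -> D) : R :=
  (INR #|[set v | f v != g v]| / INR #|D|)%R.

(* Strongly sofic monoid. Finite subsets K of M are given as finite lists. *)
Definition strongly_sofic (M : monoid) : Prop :=
  forall K : list M, exists DeltaK : nat, (1 <= DeltaK)%N /\
    forall eps : R, (0 < eps)%R ->
      exists (D : finType) (sigma : M -> (D -> D)),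
        (0 < #|D|)%N /\
        sigma (mone M) = (fun v : D => v) /\
        (forall k1 k2, List.In k1 K -> List.In k2 K ->
           (hamming (sigma (mmul k1 k2)) (sigma k1 \o sigma k2) <= eps)%R) /\
        (forall k1 k2, List.In k1 K -> List.In k2 K -> k1 <> k2 ->
           (1 - eps <= hamming (sigma k1) (sigma k2))%R) /\
        (forall k, List.In k K -> forall v : D,
           (#|[set u | sigma k u == v]| <= DeltaK)%N).

(* Main.v *)
Require Import Defs.
From mathcomp Require Import all_boot.
From Stdlib Require Import Reals Lra.

Lemma key (D : finType) (s : D -> D) (d : nat) :
  (forall v, #|[set u | s u == v]| <= d) ->
  #|[set v | s v == s (s v)]| <= d * #|[set v | v == s v]|.
Proof.
move=> Hf.
rewrite -sum1_card (partition_big s (mem [set v | v == s v])); last first.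
  by move=> i; rewrite !inE => /eqP {1}->.
rewrite mulnC -sum_nat_const; apply: leq_sum => w _.
rewrite sum1_card; apply: leq_trans (Hf w); apply: subset_leq_card.
by apply/subsetP => u; rewrite !inE => /andP[].
Qed.

Lemma compl_card (D : finType) (P : pred D) :
  #|[set v | ~~ P v]| + #|[set v | P v]| = #|D|.
Proof.
have -> : [set v | ~~ P v] = ~: [set v | P v] by apply/setP => v; rewrite !inE.
by rewrite addnC cardsC.
Qed.

Theorem proposition3p14 (M : monoid) :
  (exists e : M, mmul e e = e /\ e <> mone M) -> ~ strongly_sofic M.
Proof.
move=> [e [ee ne]] H.
have [d [Hd H2]] := H [:: mone M; e].
have epspos : (0 < / INR (d + 2))%R.
  apply: Rinv_0_lt_compat; apply: lt_0_INR; apply/ltP; rewrite addn2 //.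
have [D [s [Dn [s1 [Hmul [Hdist Hfib]]]]]] := H2 _ epspos.
have inE1 : List.In e [:: mone M; e] by right; left.
have in1 : List.In (mone M) [:: mone M; e] by left.
have h1 := Hmul e e inE1 inE1.
rewrite ee in h1.
have h2 := Hdist (mone M) e in1 inE1 (fun h => ne (esym h)).
rewrite s1 in h2.
have h3 := @key _ _ _ (Hfib e inE1).
have c1 := @compl_card _ (fun v => s e v == (s e \o s e) v).
have c2 := @compl_card _ (fun v => v == s e v).
rewrite /hamming in h1 h2.
simpl in h1, h2, c1, c2.
set b := #|[set v | s e v != s e (s e v)]| in h1 c1.
set a := #|[set v | s e v == s e (s e v)]| in h3 c1.
set c := #|[set v | v != s e v]| in h2 c2.
set f := #|[set v | v == s e v]| in h3 c2.
set n := #|D| in h1 h2 c1 c2 Dn.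
move: h3 => /leP h3; apply le_INR in h3.
rewrite mult_INR in h3.
have e1 : INR a = (INR n - INR b)%R by rewrite -c1 plus_INR; ring.
have e2 : INR f = (INR n - INR c)%R by rewrite -c2 plus_INR; ring.
have np : (0 < INR n)%R by apply: lt_0_INR; apply/ltP.
have hd : INR (d + 2) = (INR d + 2)%R by rewrite plus_INR.
rewrite hd in h1 h2 epspos.
have dpos : (0 <= INR d)%R by apply: pos_INR.
set eps := (/ (INR d + 2))%R in h1 h2 epspos.
have epsE : (eps * (INR d + 2) = 1)%R by rewrite /eps; field; lra.
have hb : (INR b <= eps * INR n)%R.
  apply (Rmult_le_compat_r (INR n)) in h1; last lra.
  by rewrite /Rdiv Rmult_assoc Rinv_l in h1; lra.
have hc : ((1 - eps) * INR n <= INR c)%R.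
  apply (Rmult_le_compat_r (INR n)) in h2; last lra.
  by rewrite /Rdiv Rmult_assoc Rinv_l in h2; lra.
rewrite e1 e2 in h3.
have : ((1 - eps) * INR n <= INR d * (eps * INR n))%R by nra.
move=> hh.
have : ((INR d + 2) * ((1 - eps) * INR n) <= (INR d + 2) * (INR d * (eps * INR n)))%R.
  apply: Rmult_le_compat_l; lra.
have -> : ((INR d + 2) * ((1 - eps) * INR n) = (INR d + 1) * INR n)%R.
  rewrite Rmult_minus_distr_r. nra.
have -> : ((INR d + 2) * (INR d * (eps * INR n)) = INR d * INR n)%R.
  nra.
nra.
Qed.
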